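(* Structural embeddings with $\mathrm{LPE}$ as node-level positional encoding are sufficiently node- and adjacency-identifying.
   Context: Graphs $G$ are finite, undirected, without self-loops and without isolated nodes, with $n$ nodes, adjacency matrix $\mathbf{A}(G)$ and degree matrix $\mathbf{D}$. The graph Laplacian is $\mathbf{L}=\mathbf{D}-\mathbf{A}(G)$ (the normalized Laplacian $\mathbf{D}^{-1/2}\mathbf{L}\mathbf{D}^{-1/2}$ may be used instead). Let $\lambda=(\lambda_1,\dots,\lambda_l)^T$ be the $l$ smallest (possibly repeated) eigenvalues and $\mathbf{V}\in\mathbb{R}^{n\times l}$ have as $j$-th column an eigenvector for $\lambda_j$ (orthonormal). $\mathrm{LPE}(\mathbf{V},\lambda)=\rho\big([\phi(\mathbf{V}^T_1,\lambda+\epsilon)\cdots\phi(\mathbf{V}^T_n,\lambda+\epsilon)]\big)$, where $\epsilon\in\mathbb{R}^l$ is a learnable zero-initialized vector, $\phi\colon\mathbb{R}^2\to\mathbb{R}^d$ is an FFN applied to each pair $(\mathbf{V}_{ij},\lambda_j+\epsilon_j)$, and $\rho\colon\mathbb{R}^{l\times d}\to\mathbb{R}^d$ is a permutation-equivariant network applied per node (e.g. sum over the $l$ entries followed by an FFN), giving a vector $\mathrm{emb}_{PE}(v)$ for each node $v$. Structural embeddings: $\mathbf{P}(v)=\mathsf{FFN}(\mathrm{emb}_{\deg}(v)+\mathrm{emb}_{PE}(v))$, with $\mathrm{emb}_{\deg}$ a learnable embedding of the node degree and $\mathsf{FFN}$ an MLP; all networks and dimensions are parameters. For $\mathbf{P}\in\mathbb{R}^{n\times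 d}$ and $\mathbf{W}^Q,\mathbf{W}^K\in\mathbb{R}^{d\times d}$ let $\tilde{\mathbf{P}}=\frac{1}{\sqrt{d_k}}\mathbf{P}\mathbf{W}^Q(\mathbf{P}\mathbf{W}^K)^T$ ($d_k>0$ fixed). $\mathbf{P}$ is node-identifying if for some $\mathbf{W}^Q,\mathbf{W}^K$: $\tilde{\mathbf{P}}_{ij}=\max_k\tilde{\mathbf{P}}_{ik}\iff i=j$; adjacency-identifying if for some $\mathbf{W}^Q,\mathbf{W}^K$: $\tilde{\mathbf{P}}_{ij}=\max_k\tilde{\mathbf{P}}_{ik}\iff\mathbf{A}(G)_{ij}=1$. Parametrized structural embeddings are sufficiently node-identifying (resp. adjacency-identifying) if there is a node-identifying (resp. adjacency-identifying) matrix $\mathbf{P}$ such that for every $\varepsilon>0$ some parameter choice yields embeddings $\mathbf{Q}$ with $\|\mathbf{P}-\mathbf{Q}\|_F<\varepsilon$. *)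

(* Defs.v *)
From HB Require Import structures.
From mathcomp Require Import all_boot all_order all_algebra.
From mathcomp Require Import reals.
Set Implicit Arguments. Unset Strict Implicit. Unset Printing Implicit Defensive.
Import Order.TTheory GRing.Theory Num.Theory.
Local Open Scope ring_scope.

Section Defs.
Variable R : realType.

Definition simple_graph n (e : rel 'I_n) : Prop :=
  (forall i j, e i j = e j i) /\ (forall i, ~~ e i i).
Definition no_isolated n (e : rel 'I_n) : Prop := forall i, exists j, e i j.

Definition adjmx n (e : rel 'I_n) : 'M[R]_n := \matrix_(i, j) (e i j)%:R.
Definition deg n (e : rel 'I_n) (v : 'I_n) : nat := #|[set u | e v u]|.
Definition degmx n (e : rel 'I_n) : 'M[R]_n := diag_mx (\row_i (deg e i)%:R).
Definition laplacian n (e : rel 'I_n) : 'M[R]_n := degmx e - adjmx e.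
Definition norm_laplacian n (e : rel 'I_n) : 'M[R]_n :=
  let Dm := diag_mx (\row_i (Num.sqrt (deg e i)%:R)^-1) in
  Dm *m laplacian e *m Dm.
Definition lap (normalized : bool) n (e : rel 'I_n) : 'M[R]_n :=
  if normalized then norm_laplacian e else laplacian e.

(* V (n x n) has orthonormal columns, column j is an eigenvector of Lm for
   eigenvalue lam j, eigenvalues sorted increasingly (l = n, all of them). *)
Definition eigendecomp n (Lm : 'M[R]_n) (V : 'M[R]_n) (lam : 'I_n -> R) : Prop :=
  [/\ V^T *m V = 1%:M,
      forall j, Lm *m col j V = lam j *: col j V
    & forall i j : 'I_n, (i <= j)%N -> lam i <= lam j].

Definition relu m (x : 'rV[R]_m) : 'rV[R]_m := map_mx (fun t => Num.max t 0) x.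

Record mlp (a b : nat) := MLP {
  mlp_h : nat;
  mlp_W0 : 'M[R]_(a, mlp_h);
  mlp_b0 : 'rV[R]_mlp_h;
  mlp_hidden : seq ('M[R]_(mlp_h, mlp_h) * 'rV[R]_mlp_h);
  mlp_W1 : 'M[R]_(mlp_h, b);
  mlp_b1 : 'rV[R]_b }.

Definition mlp_eval a b (f : mlp a b) (x : 'rV[R]_a) : 'rV[R]_b :=
  let z0 := relu (x *m mlp_W0 f + mlp_b0 f) in
  let z := foldl (fun z p => relu (z *m p.1 + p.2)) z0 (mlp_hidden f) in
  z *m mlp_W1 f + mlp_b1 f.

Record se_params (n d : nat) := SEParams {
  sp_eps : 'I_n -> R;
  sp_phi : mlp 2 d;
  sp_rho : mlp d d;
  sp_deg : nat -> 'rV[R]_d;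
  sp_ffn : mlp d d }.

Definition pair_row (x y : R) : 'rV[R]_2 :=
  \row_(k < 2) (if k == ord0 then x else y).

Definition lpe n d (V : 'M[R]_n) (lam : 'I_n -> R) (p : se_params n d)
  (v : 'I_n) : 'rV[R]_d :=
  mlp_eval (sp_rho p)
    (\sum_(j < n) mlp_eval (sp_phi p) (pair_row (V v j) (lam j + sp_eps p j))).

Definition struct_emb n d (e : rel 'I_n) (V : 'M[R]_n) (lam : 'I_n -> R)
  (p : se_params n d) : 'M[R]_(n, d) :=
  \matrix_(v < n) mlp_eval (sp_ffn p) (sp_deg p (deg e v) + lpe V lam p v).

Definition ptilde n d (dk : R) (P : 'M[R]_(n, d)) (WQ WK : 'M[R]_d) : 'M[R]_n :=
  (Num.sqrt dk)^-1 *: (P *m WQ *m (P *m WK)^T).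

Definition is_row_max n (Pt : 'M[R]_n) (i j : 'I_n) : Prop :=
  forall k, Pt i k <= Pt i j.

Definition node_identifying n d (dk : R) (P : 'M[R]_(n, d)) : Prop :=
  exists WQ WK : 'M[R]_d,
    forall i j, is_row_max (ptilde dk P WQ WK) i j <-> i = j.

Definition adjacency_identifying n d (dk : R) (e : rel 'I_n) (P : 'M[R]_(n, d))
  : Prop :=
  exists WQ WK : 'M[R]_d,
    forall i j, is_row_max (ptilde dk P WQ WK) i j <-> adjmx e i j = 1.

Definition frob m k (M : 'M[R]_(m, k)) : R :=
  Num.sqrt (\sum_(i < m) \sum_(j < k) M i j ^+ 2).

Definition suff_node_identifying n (dk : R)
  (emb : forall d, se_params n d -> 'M[R]_(n, d)) : Prop :=
  exists d (P : 'M[R]_(n, d)), node_identifying dk P /\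
    forall eps : R, 0 < eps -> exists p : se_params n d, frob (P - emb d p) < eps.

Definition suff_adjacency_identifying n (dk : R) (e : rel 'I_n)
  (emb : forall d, se_params n d -> 'M[R]_(n, d)) : Prop :=
  exists d (P : 'M[R]_(n, d)), adjacency_identifying dk e P /\
    forall eps : R, 0 < eps -> exists p : se_params n d, frob (P - emb d p) < eps.

End Defs.

Arguments adjmx {R n} e.
Arguments degmx {R n} e.
Arguments laplacian {R n} e.
Arguments norm_laplacian {R n} e.
Arguments lap {R} normalized {n} e.

(* Main.v *)
Require Import Defs.
From HB Require Import structures.
From mathcomp Require Import all_boot all_order all_algebra.
From mathcomp Require Import reals.
From mathcomp Require Import lra.
Set Implicit Arguments. Unset Strict Implicit. Unset Printing Implicit Defensive.
Import Order.TTheory GRing.Theory Num.Theory.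
Local Open Scope ring_scope.

Lemma max_sub (R : realType) (t : R) : Num.max t 0 - Num.max (-t) 0 = t.
Proof.
rewrite !maxEle; case: (lerP t 0) => h; case: (lerP (-t) 0) => h'; lra.
Qed.

Definition aff_mlp (R : realType) a b (A : 'M[R]_(a, b)) (c : 'rV[R]_b) : mlp R a b :=
  @MLP R a b (b + b) (row_mx A (-A)) (row_mx c (-c)) [::] (col_mx 1%:M (-1%:M)) 0.

Lemma aff_mlpE (R : realType) a b (A : 'M[R]_(a, b)) (c : 'rV[R]_b) x :
  mlp_eval (aff_mlp A c) x = x *m A + c.
Proof.
rewrite /mlp_eval /= mul_mx_row add_row_mx /relu map_row_mx mul_row_col.
rewrite mulmx1 mulmxN mulmx1 addr0 mulmxN -opprD.
apply/matrixP => i j; rewrite !mxE; exact: max_sub.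
Qed.
Definition phi_mlp (R : realType) n : mlp R 2 n :=
  @MLP R 2 n n (\matrix_(r < 2, k < n) (if r == ord0 then 1 else -1))
    (\row_(k < n) (2 * (k%:R : R) + 1)) [::] 1%:M 0.

Definition Tmx (R : realType) n : 'M[R]_n := \matrix_(j, k) ((j <= k)%N)%:R.
Definition cvec (R : realType) n : 'rV[R]_n :=
  \row_(k < n) \sum_(j < n) (if (j <= k)%N then 2 * ((k%:R : R) - j%:R) + 1 else 0).

Lemma phi_sum (R : realType) n (x : 'rV[R]_n) :
  (forall j, -1 <= x 0 j <= 1) ->
  \sum_(j < n) mlp_eval (phi_mlp R n) (pair_row (x 0 j) (2 * j%:R)) =
  x *m Tmx R n + cvec R n.
Proof.
move=> hx; apply/matrixP => i k; rewrite (ord1 i) summxE !mxE -big_split /=.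
apply: eq_bigr => j _.
rewrite /mlp_eval /= mulmx1 addr0 !mxE big_ord_recl big_ord1 !mxE /=.
have := hx j; case: (leqP j k) => hjk hxj.
  have hjk' : (j%:R : R) <= k%:R by rewrite ler_nat.
  have -> : (true%:R : R) = 1 by [].
  rewrite maxEle; case: ifP => h; lra.
have hjk' : (k%:R : R) + 1 <= j%:R by rewrite natr1 ler_nat.
have -> : (false%:R : R) = 0 by [].
rewrite maxEle; case: ifP => h; lra.
Qed.
Lemma Tmx_unit (R : realType) n : Tmx R n \in unitmx.
Proof.
rewrite unitmxE -det_tr det_trig.
  by rewrite big1 ?unitr1 // => i _; rewrite !mxE leqnn.
apply/is_trig_mxP => i j hij; rewrite !mxE.
by rewrite leqNgt hij.
Qed.

Lemma entry_bound (R : realType) n (V : 'M[R]_n) :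
  V^T *m V = 1%:M -> forall v j, -1 <= V v j <= 1.
Proof.
move=> /mulmx1C h v j.
have : \sum_(k < n) V v k * V v k = 1.
  have := congr1 (fun M : 'M[R]_n => M v v) h; rewrite !mxE eqxx /= => hvv; rewrite -[RHS]hvv.
  by apply: eq_bigr => k _; rewrite !mxE.
rewrite (bigD1 j) //= => hs.
have : 0 <= \sum_(k < n | k != j) V v k * V v k.
  by apply: sumr_ge0 => k _; rewrite -expr2 sqr_ge0.
move=> h0; nra.
Qed.

Definition params (R : realType) n (lam : 'I_n -> R) : se_params R n n :=
  @SEParams R n n (fun j => 2 * j%:R - lam j) (phi_mlp R n)
    (aff_mlp (invmx (Tmx R n)) (- (cvec R n *m invmx (Tmx R n))))
    (fun _ => 0) (aff_mlp 1%:M 0).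

Lemma emb_eq (R : realType) n (e : rel 'I_n) (V : 'M[R]_n) lam :
  V^T *m V = 1%:M -> struct_emb e V lam (params lam) = V.
Proof.
move=> hV; apply/matrixP => v k.
rewrite mxE aff_mlpE mulmx1 addr0 add0r /lpe /=.
rewrite (eq_bigr (fun j => mlp_eval (phi_mlp R n) (pair_row (row v V 0 j) (2 * j%:R)))); last first.
  by move=> j _; rewrite addrC subrK mxE.
rewrite phi_sum; last by move=> j; rewrite mxE; exact: entry_bound.
rewrite aff_mlpE mulmxDl addrK mulmxK ?Tmx_unit //.
by rewrite mxE.
Qed.
Lemma frob0 (R : realType) m k : frob (0 : 'M[R]_(m, k)) = 0.
Proof.
rewrite /frob big1 ?sqrtr0 // => i _; rewrite big1 // => j _.
by rewrite mxE expr0n.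
Qed.

Theorem theorem4p1 (R : realType) (n : nat) (e : rel 'I_n)
  (normalized : bool) (V : 'M[R]_n) (lam : 'I_n -> R) (dk : R) :
  simple_graph e -> no_isolated e ->
  eigendecomp (lap normalized e) V lam ->
  0 < dk ->
  suff_node_identifying dk (fun d p => struct_emb e V lam p) /\
  suff_adjacency_identifying dk e (fun d p => struct_emb e V lam p).
Proof.
move=> _ hiso [hV _ _] hdk.
have hV' := mulmx1C hV.
have hs : 0 < (Num.sqrt dk)^-1 by rewrite invr_gt0 sqrtr_gt0.
set s := (Num.sqrt dk)^-1 in hs.
have happrox : forall eps : R, 0 < eps ->
    exists p : se_params R n n, frob (V - struct_emb e V lam p) < eps.
  move=> eps he; exists (params lam); by rewrite emb_eq // subrr frob0.
split.
  exists n, V; split => //.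
  exists 1%:M, 1%:M => i j.
  have hP : ptilde dk V 1%:M 1%:M = s *: 1%:M by rewrite /ptilde !mulmx1 hV'.
  rewrite /is_row_max hP; split.
    move=> /(_ i); rewrite !mxE eqxx /=.
    case: (i =P j) => // _; rewrite mulr0n mulr0 mulr1 => h; by move: hs; rewrite ltNge h.
  move=> <- k; rewrite !mxE eqxx mulr1n mulr1.
  case: (i =P k) => _; rewrite ?mulr1n ?mulr0n ?mulr1 ?mulr0 ?lexx //; exact: ltW.
exists n, V; split => //.
exists 1%:M, (V^T *m adjmx e *m V)^T => i j.
have hP : ptilde dk V 1%:M (V^T *m adjmx e *m V)^T = s *: adjmx e.
  rewrite /ptilde !mulmx1 trmx_mul trmxK !mulmxA hV' mul1mx -mulmxA hV' mulmx1.
  by [].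
have ade : forall a b : 'I_n, (@adjmx R n e a b = 1) <-> e a b.
  move=> a b; rewrite /adjmx mxE; case: (e a b) => //=.
  by split => // /eqP; rewrite eq_sym oner_eq0.
rewrite /is_row_max hP ade; split.
  have [k hk] := hiso i.
  move=> /(_ k); rewrite !mxE hk.
  case: (e i j) => //=; rewrite mulr1n mulr1 mulr0n mulr0 => h; by move: hs; rewrite ltNge h.
move=> hij k; rewrite !mxE hij mulr1n mulr1.
case: (e i k); rewrite ?mulr1n ?mulr0n ?mulr1 ?mulr0 ?lexx //; exact: ltW.
Qed.
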